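(* Let $\mathbb{F}$ be a field, $D=(X,E,s,t)$ a finite directed multigraph, $U$ an $\mathbb{F}$-vector space, $\phi:X\to U$ a map, and $T\subset E$ a spanning forest of $D$. Let $\{r_1,\dots,r_{\delta_\phi}\}$ be any $\mathbb{F}$-basis of $\mathcal{Z}_{\mathrm{alg}}:=\mathrm{Im}(B_D)\cap\mathrm{Ker}(\hat\phi)$, and for each $i$ let $\zeta_{r_i}\in\mathrm{Ker}(\partial_\phi)$ be any element with $B_D(\zeta_{r_i})=r_i$ (such elements exist). Then $$\{Z_e^{(\mathrm{top})}\}_{e\in E\setminus T}\cup\{\zeta_{r_1},\dots,\zeta_{r_{\delta_\phi}}\}$$ is an $\mathbb{F}$-basis of $\mathrm{Ker}(\partial_\phi)$.
   Context: A finite directed multigraph $D=(X,E,s,t)$ has finite sets $X,E$ and maps $s,t:E\to X$ (loops and parallel edges allowed); $c(D)$ is its number of weakly connected components. $B_D:\mathbb{F}^E\to\mathbb{F}^X$ is linear with $B_D(\mathbf{1}_e)=\mathbf{1}_{t(e)}-\mathbf{1}_{s(e)}$; $\hat\phi:\mathbb{F}^X\to U$ is the linear extension of $\phi$; $\partial_\phi:\mathbb{F}^E\to U$ is linear with $\partial_\phi(\mathbf{1}_e)=\phi(t(e))-\phi(s(e))$; $\delta_\phi:=\dim(\mathrm{Im}(B_D)\cap\mathrm{Ker}(\hat\phi))$. A spanning forest is a subset $T\subset E$ whose underlying undirected graph is acyclic and with $|T|=|X|-c(D)$. For vertices $a,b$ in the same weakly connected component, let $a=y_0,\dots,y_m=b$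 be the unique simple path in the underlying graph of $T$, $g_k\in T$ the edge joining $y_{k-1},y_k$, $\eta_k=+1$ if $s(g_k)=y_{k-1}$ and $\eta_k=-1$ if $s(g_k)=y_k$; the signed path vector is $F[a,b]=\sum_k\eta_k\mathbf{1}_{g_k}$ (with $F[a,a]=0$). For $e\in E\setminus T$, the topological cycle is $Z_e^{(\mathrm{top})}:=\mathbf{1}_e-F[s(e),t(e)]\in\mathbb{F}^E$. *)

(* Defs.v *)
From HB Require Import structures.
From mathcomp Require Import all_boot all_order all_algebra.
Set Implicit Arguments. Unset Strict Implicit. Unset Printing Implicit Defensive.
Import Order.TTheory GRing.Theory Num.Theory.
Local Open Scope ring_scope.

Section Graph.
Variables (F : fieldType) (X E : finType) (s t : E -> X).

(** Vectors: F^E is {ffun E -> F^o}, F^X is {ffun X -> F^o}. *)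
Definition ind (A : finType) (a : A) : {ffun A -> F^o} := [ffun y => (y == a)%:R].

Definition incB (w : {ffun E -> F^o}) : {ffun X -> F^o} :=
  \sum_(e : E) w e *: (ind (t e) - ind (s e)).

Definition phihat (U : lmodType F) (phi : X -> U) (v : {ffun X -> F^o}) : U :=
  \sum_(x : X) v x *: phi x.

Definition dphi (U : lmodType F) (phi : X -> U) (w : {ffun E -> F^o}) : U :=
  \sum_(e : E) w e *: (phi (t e) - phi (s e)).

(** Undirected walks: a step (g, b) traverses edge g forwards (from s g to t g)
    if b = true and backwards (from t g to s g) if b = false. *)
Definition stsrc (st : E * bool) : X := if st.2 then s st.1 else t st.1.
Definition sttgt (st : E * bool) : X := if st.2 then t st.1 else s st.1.

Fixpoint walk_ok (a b : X) (p : seq (E * bool)) : bool :=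
  match p with
  | [::] => a == b
  | st :: p' => (stsrc st == a) && walk_ok (sttgt st) b p'
  end.

Definition simple_tpath (T : {set E}) (a b : X) (p : seq (E * bool)) : bool :=
  [&& walk_ok a b p, uniq (a :: map sttgt p) & all (fun st => st.1 \in T) p].

(** Signed path vector sum_k eta_k 1_{g_k}, eta_k = +1 iff s(g_k) = y_{k-1}. *)
Definition signvec (p : seq (E * bool)) : {ffun E -> F^o} :=
  \sum_(st <- p) (if st.2 then 1 else -1) *: ind st.1.

(** Underlying undirected graph of T is acyclic: no cycle (nonempty closed walk
    with pairwise distinct edges and pairwise distinct vertices);
    loops and pairs of parallel edges count as cycles. *)
Definition acyclic (T : {set E}) : Prop :=
  forall (a : X) (p : seq (E * bool)),
    p != [::] -> all (fun st => st.1 \in T) p -> uniq (map fst p) ->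
    walk_ok a a p -> uniq (map sttgt p) -> False.

Definition wadj : rel X :=
  fun x y => [exists e, ((s e == x) && (t e == y)) || ((s e == y) && (t e == x))].
Definition ncomp : nat := n_comp wadj predT.

Definition spanning_forest (T : {set E}) : Prop :=
  acyclic T /\ #|T| = (#|X| - ncomp)%N.

(** Z is the topological cycle of e w.r.t. T:  1_e - F[s e, t e], where
    F[a,b] is the signed path vector of the (unique) simple T-path from a to b. *)
Definition is_top_cycle (T : {set E}) (e : E) (Z : {ffun E -> F^o}) : Prop :=
  exists p, simple_tpath T (s e) (t e) p /\ Z = ind e - signvec p.

End Graph.

(* Main.v *)
Require Import Defs.
From HB Require Import structures.
From mathcomp Require Import all_boot all_order all_algebra.
Set Implicit Arguments. Unset Strict Implicit. Unset Printing Implicit Defensive.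
Import GRing.Theory.
Local Open Scope ring_scope.

Section G.
Variables (F : fieldType) (X E : finType) (s t : E -> X).

Definition Gmap (V : lmodType F) (g : X -> V) (w : {ffun E -> F^o}) : V :=
  \sum_(e : E) w e *: (g (t e) - g (s e)).

Lemma Gmap_lin (V : lmodType F) (g : X -> V) : linear (Gmap g).
Proof.
move=> a u v; rewrite /Gmap scaler_sumr -big_split; apply: eq_bigr => e _.
by rewrite !ffunE scalerDl scalerA.
Qed.
HB.instance Definition _ (V : lmodType F) (g : X -> V) :=
  GRing.isLinear.Build F _ _ _ (Gmap g) (Gmap_lin g).

Lemma Gmap_ind (V : lmodType F) (g : X -> V) e : Gmap g (ind F e) = g (t e) - g (s e).
Proof.
rewrite /Gmap (bigD1 e) //= big1 ?addr0 => [|e' ne]; rewrite ffunE ?eqxx ?scale1r //.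
by rewrite (negbTE ne) scale0r.
Qed.

Lemma Gmap_walk (V : lmodType F) (g : X -> V) p a b :
  walk_ok s t a b p -> Gmap g (signvec F p) = g b - g a.
Proof.
elim: p a => [|[e [|]] p IH] a /=.
  by move/eqP=> ->; rewrite /signvec big_nil linear0 subrr.
- case/andP; rewrite /stsrc /sttgt /= => /eqP <- /IH H.
  by rewrite /signvec big_cons linearD linearZ /= -/(signvec F p) H Gmap_ind scale1r addrC subrKA.
- case/andP; rewrite /stsrc /sttgt /= => /eqP <- /IH H.
  rewrite /signvec big_cons linearD linearZ /= -/(signvec F p) H Gmap_ind.
  by rewrite scaleN1r opprB addrC subrKA.
Qed.

Lemma incBE : incB s t = Gmap (@ind F _). Proof. by []. Qed.
Lemma dphiE (U : lmodType F) (phi : X -> U) : dphi s t phi = Gmap phi. Proof. by []. Qed.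

Lemma phihat_lin (U : lmodType F) (phi : X -> U) : linear (phihat phi).
Proof.
move=> a u v; rewrite /phihat scaler_sumr -big_split; apply: eq_bigr => e _.
by rewrite !ffunE scalerDl scalerA.
Qed.
HB.instance Definition _ (U : lmodType F) (phi : X -> U) :=
  GRing.isLinear.Build F _ _ _ (phihat phi) (phihat_lin phi).

Lemma phihat_ind (U : lmodType F) (phi : X -> U) x : phihat phi (ind F x) = phi x.
Proof.
rewrite /phihat (bigD1 x) //= big1 ?addr0 => [|e' ne]; rewrite ffunE ?eqxx ?scale1r //.
by rewrite (negbTE ne) scale0r.
Qed.

Lemma phihat_incB (U : lmodType F) (phi : X -> U) w :
  phihat phi (incB s t w) = dphi s t phi w.
Proof.
rewrite /incB linear_sum /dphi; apply: eq_bigr => e _.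
by rewrite linearZ linearB /= !phihat_ind.
Qed.

Lemma ffun_expand (A : finType) (w : {ffun A -> F^o}) : w = \sum_(a : A) w a *: ind F a.
Proof.
apply/ffunP => y; rewrite sum_ffunE (bigD1 y) //= big1 ?addr0 => [|a na].
  by rewrite !ffunE eqxx; exact: (esym (mulr1 _)).
by rewrite !ffunE eq_sym (negbTE na); exact: (mulr0 _).
Qed.

Lemma wadj_sym : symmetric (wadj s t).
Proof.
move=> x y; apply/existsP/existsP => -[e He]; exists e; move: He;
  by rewrite orbC.
Qed.

Lemma connect_incB x y : connect (wadj s t) x y ->
  exists w, incB s t w = ind F y - ind F x.
Proof.
case/connectP => p; elim: p x => [|z p IH] x /=.
  by move=> _ ->; exists 0; rewrite incBE linear0 subrr.
case/andP => /existsP [e He] /IH H /H [w Hw].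
have [w1 Hw1] : exists w1, incB s t w1 = ind F z - ind F x.
  case/orP: He => /andP [/eqP Hs /eqP Ht].
    by exists (ind F e); rewrite incBE Gmap_ind Hs Ht.
  by exists (- ind F e); rewrite incBE linearN /= Gmap_ind Hs Ht opprB.
by exists (w + w1); rewrite incBE linearD /= -!incBE Hw Hw1 addrA subrK.
Qed.

Lemma free_eval (B : finType) (vs : seq {ffun B -> F^o}) :
  (forall j, (j < size vs)%N -> exists y, forall i, (i < size vs)%N -> (nth 0 vs i) y = (i == j)%:R) ->
  free vs.
Proof.
move=> H; apply/(@freeP _ _ _ (in_tuple vs)) => k Hk j.
have [y Hy] := H j (ltn_ord j).
have := congr1 (fun v : {ffun B -> F^o} => v y) Hk; rewrite sum_ffunE ffunE (bigD1 j) //= big1.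
  by rewrite addr0 ffunE Hy // eqxx; move=> <-; rewrite /GRing.scale /= mulr1.
move=> i nij; rewrite ffunE Hy //.
have -> : (nat_of_ord i == nat_of_ord j) = false by exact: negbTE nij.
exact: scaler0.
Qed.

Lemma card_nonroots :
  #|predC (roots (wadj s t))| = (#|X| - ncomp s t)%N.
Proof.
rewrite /ncomp /n_comp_mem -(cardC (roots (wadj s t))).
have -> : #|predI (roots (wadj s t)) (mem predT)| = #|roots (wadj s t)|.
  by apply: eq_card => x; rewrite !inE andbT.
by rewrite addKn.
Qed.

HB.instance Definition _ :=
  GRing.isLinear.Build F _ _ _ (incB s t) (Gmap_lin (@ind F X)).

Lemma key (T : {set E}) (HT : #|T| = (#|X| - ncomp s t)%N)
  (HZ : forall e, e \notin T -> exists p,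
        walk_ok s t (s e) (t e) p && all (fun st => st.1 \in T) p)
  (w : {ffun E -> F^o}) :
  (forall e, e \notin T -> w e = 0) -> incB s t w = 0 -> w = 0.
Proof.
move=> w0 Bw0.
pose KT := <<[seq ind F e | e <- enum T]>>%VS.
pose f : 'Hom({ffun E -> F^o}, {ffun X -> F^o}) := linfun (incB s t).
have indKT e : e \in T -> ind F e \in KT.
  by move=> eT; apply: memv_span; apply: map_f; rewrite mem_enum.
have wKT : w \in KT.
  rewrite (ffun_expand w) (bigID (mem T)) /= [X in _ + X]big1 ?addr0.
    by apply: memv_suml => e eT; apply: memvZ; apply: indKT.
  by move=> e eT; rewrite w0 ?scale0r.
have wK : w \in lker f by rewrite memv_ker lfunE /= Bw0.
have imgall u : incB s t u \in (f @: KT)%VS.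
  rewrite (ffun_expand u) linear_sum; apply: memv_suml => e _; rewrite linearZ; apply: memvZ.
  case: (boolP (e \in T)) => He.
    by rewrite -lfunE; apply: memv_img; apply: indKT.
  have [p /andP [Hw Hp]] := HZ e He.
  change (incB s t (ind F e) \in (f @: KT)%VS).
  have -> : incB s t (ind F e) = incB s t (signvec F p).
    by rewrite !incBE Gmap_ind (Gmap_walk _ Hw).
  rewrite -lfunE; apply: memv_img.
  rewrite /signvec big_seq; apply: memv_suml => st Hst; apply: memvZ; apply: indKT.
  exact: (allP Hp).
pose xs := enum (predC (roots (wadj s t))).
pose R := [seq ind F x - ind F (fingraph.root (wadj s t) x) | x <- xs].
have csym := sym_connect_sym wadj_sym.
have Rsub : (<<R>> <= f @: KT)%VS.
  apply/span_subvP => v /mapP [x _ ->].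
  have [u Hu] := connect_incB (connect_root (wadj s t) x).
  by rewrite -opprB -Hu -linearN; apply: imgall.
have Rfree : free R.
  apply: free_eval => j Hj.
  have x0 : X by move: Hj; rewrite size_map; case: (xs) => // a _ _; exact a.
  exists (nth x0 xs j) => i Hi.
  rewrite size_map in Hi Hj.
  rewrite (nth_map x0) // !ffunE.
  have -> : (nth x0 xs j == fingraph.root (wadj s t) (nth x0 xs i)) = false.
    apply/negP => /eqP Hr.
    have : nth x0 xs j \in xs by apply: mem_nth.
    rewrite mem_enum inE /= /roots Hr root_root //.
    by rewrite eqxx.
  by rewrite nth_uniq ?enum_uniq // eq_sym subr0.
have := limg_ker_dim f KT.
have dKT : (\dim KT <= #|T|)%N.
  by apply: leq_trans (dim_span _) _; rewrite size_map -cardE.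
have dR : (#|T| <= \dim (f @: KT))%N.
  apply: leq_trans (dimvS Rsub); move/eqP: Rfree => ->.
  by rewrite size_map -cardE card_nonroots HT.
move=> Hd.
have : \dim (KT :&: lker f) = 0%N.
  apply/eqP; rewrite -(eqn_add2r (\dim (f @: KT))) Hd add0n eqn_leq (leq_trans dKT dR).
  by rewrite -Hd leq_addl.
move/eqP; rewrite dimv_eq0 => /eqP H0.
have : w \in (KT :&: lker f)%VS by rewrite memv_cap wKT wK.
by rewrite H0 memv0 => /eqP.
Qed.
End G.

Lemma free_cat_lin (K : fieldType) (U V : vectType K) (f : 'Hom(U, V)) (Z Y : seq U) :
  free Z -> (forall z, z \in Z -> f z = 0) -> free (map f Y) -> free (Z ++ Y).
Proof.
move=> fZ Zf fY.
have Hd := limg_ker_dim f <<Y>>.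
rewrite limg_span in Hd.
move/eqP: (fY); rewrite size_map => dY.
have dY' := dim_span Y.
have H0 : \dim (<<Y>> :&: lker f) = 0%N.
  by apply/eqP; rewrite -(eqn_add2r (size Y)) -{1}dY Hd add0n eqn_leq dY' -dY -Hd leq_addl.
rewrite cat_free fZ /=; apply/andP; split.
  by rewrite /free -Hd H0 dY.
apply/directv_addP; apply/eqP; rewrite -subv0.
move/eqP: H0; rewrite dimv_eq0 => /eqP <-.
rewrite capvC; apply: capvS => //.
by apply/span_subvP => z Hz; rewrite memv_ker Zf.
Qed.

Unset Implicit Arguments.

Theorem theorem2p15 (F : fieldType) (X E : finType) (s t : E -> X)
  (U : lmodType F) (phi : X -> U) (T : {set E})
  (HT : spanning_forest s t T)
  (Ztop : E -> {ffun E -> F^o})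
  (HZ : forall e, e \notin T -> is_top_cycle s t T e (Ztop e))
  (rs : seq {ffun X -> F^o})
  (Hrs_free : free rs)
  (Hrs_span : forall v : {ffun X -> F^o},
      v \in <<rs>>%VS <-> ((exists w, incB s t w = v) /\ phihat phi v = 0))
  (zeta : {ffun X -> F^o} -> {ffun E -> F^o})
  (Hzeta : forall r, r \in rs -> dphi s t phi (zeta r) = 0 /\ incB s t (zeta r) = r) :
  let S := [seq Ztop e | e <- enum (~: T)] ++ map zeta rs in
  free S /\ (forall z : {ffun E -> F^o}, z \in <<S>>%VS <-> dphi s t phi z = 0).
Proof.
move=> S.
case: HT => _ HTc.
have HZ' : forall e, e \notin T -> exists p,
        walk_ok s t (s e) (t e) p && all (fun st => st.1 \in T) p.
  move=> e /HZ [p [/and3P [Hw _ Ha] _]]; exists p; by rewrite Hw Ha.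
have Zprop e : e \notin T -> [/\ incB s t (Ztop e) = 0, dphi s t phi (Ztop e) = 0 &
    forall e', e' \notin T -> Ztop e e' = (e' == e)%:R].
  move=> He; have [p [/and3P [Hw _ Ha] ->]] := HZ e He.
  split.
  - by rewrite incBE linearB /= Gmap_ind (Gmap_walk _ Hw) subrr.
  - by rewrite dphiE linearB /= Gmap_ind (Gmap_walk _ Hw) subrr.
  - move=> e' He'; rewrite !ffunE /signvec sum_ffunE big_seq big1 ?subr0 // => st Hst.
    rewrite !ffunE; have : st.1 \in T by exact: (allP Ha).
    case: eqP => [<- | _]; first by rewrite (negbTE He').
    by move=> _; exact: (mulr0 _).
pose Z := [seq Ztop e | e <- enum (~: T)].
pose f : 'Hom({ffun E -> F^o}, {ffun X -> F^o}) := linfun (incB s t).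
have mapY : map f (map zeta rs) = rs.
  rewrite -map_comp -[RHS]map_id; apply/eq_in_map => r Hr /=.
  by rewrite lfunE /= (Hzeta r Hr).2.
have ZS : {subset Z <= S} by move=> z Hz; rewrite mem_cat Hz.
have YS : {subset map zeta rs <= S} by move=> z Hz; rewrite mem_cat Hz orbT.
split.
  apply: (free_cat_lin (f := f)); last by rewrite mapY.
    apply: free_eval => j Hj.
    have e0 : E by move: Hj; rewrite size_map; case: (enum _) => // a _ _; exact a.
    rewrite size_map in Hj.
    have Hn : nth e0 (enum (~: T)) j \notin T.
      by have := mem_nth e0 Hj; rewrite mem_enum inE.
    exists (nth e0 (enum (~: T)) j) => i Hi; rewrite size_map in Hi.
    rewrite (nth_map e0) //.
    have Hi' : nth e0 (enum (~: T)) i \notin T.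
      by have := mem_nth e0 Hi; rewrite mem_enum inE.
    have [_ _ ->] := Zprop _ Hi' => //.
    by rewrite nth_uniq ?enum_uniq // eq_sym.
  move=> z /mapP [e He ->]; rewrite lfunE /=.
  by have [] := Zprop e; first by rewrite mem_enum inE in He.
have Sker : forall v, v \in S -> dphi s t phi v = 0.
  move=> v; rewrite mem_cat => /orP [/mapP [e He ->] | /mapP [r Hr ->]].
    by have [] := Zprop e; first by rewrite mem_enum inE in He.
  exact: (Hzeta r Hr).1.
move=> z; split.
  move=> /(@coord_span _ _ _ (in_tuple S)) ->.
  rewrite dphiE linear_sum big1 // => i _; rewrite linearZ /= -dphiE Sker ?scaler0 //.
  by apply: mem_nth.
move=> Hz.
have : incB s t z \in <<rs>>%VS by apply/Hrs_span; split; [exists z | rewrite phihat_incB].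
move=> /(@coord_span _ _ _ (in_tuple rs)) Hc.
pose y := \sum_i coord (in_tuple rs) i (incB s t z) *: zeta (rs`_i).
have yS : y \in <<S>>%VS.
  apply: memv_suml => i _; apply: memvZ; apply: memv_span; apply: YS.
  by apply: map_f; apply: mem_nth.
have By : incB s t y = incB s t z.
  rewrite [RHS]Hc linear_sum; apply: eq_bigr => i _; rewrite linearZ /=.
  by rewrite (Hzeta _ (mem_nth _ (ltn_ord i))).2.
pose q := \sum_(e in ~: T) (z - y) e *: Ztop e.
have qS : q \in <<S>>%VS.
  apply: memv_suml => e He; apply: memvZ; apply: memv_span; apply: ZS.
  by apply: map_f; rewrite mem_enum.
have qE : q = \sum_(e in ~: T) (z - y) e *: Ztop e by []. clearbody y q.
have K0 : z - y - q = 0.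
  apply: (key HTc HZ').
    move=> e' He'; have He2 : e' \in ~: T by rewrite inE.
    rewrite !ffunE qE sum_ffunE (bigD1 e' He2) /= big1 => [|e].
      rewrite ffunE; have [_ _ H3] := Zprop _ He'; rewrite H3 //.
      by rewrite addr0 eqxx !ffunE /GRing.scale /= mulr1 subrr.
    case/andP => He ne; rewrite ffunE.
    have Hn : e \notin T by rewrite -in_setC; exact: He.
    have [_ _ H3] := Zprop e Hn; rewrite H3 //.
    by rewrite eq_sym (negbTE ne); exact: (mulr0 _).
  rewrite qE !linearB /=.
  change (incB s t z - incB s t y - incB s t (\sum_(e in ~: T) (z - y) e *: Ztop e) = 0).
  rewrite By subrr sub0r [incB s t (\sum_(_ in _) _)]linear_sum big1 ?oppr0 // => e He.
  have Hn : e \notin T by move: He; rewrite ?inE.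
  have [H1 _ _] := Zprop e Hn.
  change (incB s t ((z - y) e *: Ztop e) = 0).
  rewrite linearZ; change ((z - y) e *: incB s t (Ztop e) = 0); by rewrite H1 scaler0.
have -> : z = y + q by apply/eqP; rewrite -subr_eq0 opprD addrA K0.
exact: memvD.
Qed.
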